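(* Let $k\ge2$ and let $\mathcal C_2$ be the binary $(2k+1,k)$ code with generator matrix $G_c=(e_1\ \ e_1\ \ e_1+e_2\ \ e_2\ \ e_2+e_3\ \ e_3\ \cdots\ e_{k-1}+e_k\ \ e_k\ \ e_k)$. Then $\mathcal C_2$ has the Easy Repair Property.
   Context: $e_i$ denotes the $i$-th standard unit vector of $\mathbb F_2^k$. Let $g_1,\dots,g_{2k+1}$ be the columns of $G_c$; nodes are the coordinates of codewords $c=uG_c$. An erasure pattern is a set $S^e$ of erased nodes; the others are live. It is correctable if no two distinct codewords coincide on all live positions. A node $c_i$ is related to distinct nodes $c_{j_1},\dots,c_{j_\gamma}$ (all different from $c_i$) if $g_i=g_{j_1}+\dots+g_{j_\gamma}$. An erased node allows for easy repair if it is related to $\gamma\le2$ live nodes. An erasure pattern allows for easy repair if all erased nodes can be recovered by a sequence of easy repairs, where after each step the recovered node is regarded as live. A code has the Easy Repair Property if every correctable erasure pattern allows for easy repair. *)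

(* Defs.v *)
From HB Require Import structures.
From mathcomp Require Import all_boot all_order all_algebra.
Set Implicit Arguments. Unset Strict Implicit. Unset Printing Implicit Defensive.
Import GRing.Theory.
Local Open Scope ring_scope.

(* Generic notions for a binary linear code with generator matrix
   G : 'M['F_2]_(k, n); node j is coordinate j of the codeword u *m G,
   and g_j = col j G. *)
Section EasyRepair.
Variables (k n : nat) (G : 'M['F_2]_(k, n)).

Definition codeword (u : 'rV['F_2]_k) : 'rV['F_2]_n := u *m G.

Definition correctable (S : {set 'I_n}) : Prop :=
  forall u v : 'rV['F_2]_k,
    (forall j, j \notin S -> codeword u 0 j = codeword v 0 j) ->
    codeword u = codeword v.

Definition related (i : 'I_n) (T : {set 'I_n}) : Prop :=
  i \notin T /\ col i G = \sum_(j in T) col j G.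

Definition easy_repair (live : {set 'I_n}) (i : 'I_n) : Prop :=
  exists T : {set 'I_n},
    [/\ T \subset live, (0 < #|T| <= 2)%N & related i T].

(* all erased nodes can be recovered by a sequence of easy repairs,
   each recovered node being regarded as live afterwards *)
Definition allows_easy_repair (S : {set 'I_n}) : Prop :=
  exists s : seq 'I_n,
    perm_eq s (enum S) /\
    forall (s1 s2 : seq 'I_n) (x : 'I_n), s = s1 ++ x :: s2 ->
      easy_repair (~: S :|: [set y in s1]) x.

Definition easy_repair_property : Prop :=
  forall S : {set 'I_n}, correctable S -> allows_easy_repair S.

End EasyRepair.

(* 0-based unit vector: e_at i l = (e_{i+1})_{l+1} *)
Definition e_at (i l : nat) : 'F_2 := if l == i then 1 else 0.

(* Entry (l, j) (0-based) of G_c = (e1 e1 e1+e2 e2 e2+e3 e3 ... e_{k-1}+e_k e_k e_k):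
   column 0 = e1, column 2k = e_k, odd column 2i+1 = e_{i+1},
   even column 2i (1 <= i <= k-1) = e_i + e_{i+1}  (1-based unit vectors). *)
Definition gc_entry (k j l : nat) : 'F_2 :=
  if j == 0%N then e_at 0 l
  else if j == (2 * k)%N then e_at k.-1 l
  else if odd j then e_at j./2 l
  else e_at (j./2).-1 l + e_at j./2 l.

Definition Gc (k : nat) : 'M['F_2]_(k, 2 * k + 1) :=
  \matrix_(l < k, j < 2 * k + 1) gc_entry k j l.

(* Main.v *)
Require Import Defs.
From mathcomp Require Import all_boot all_order all_algebra.
From mathcomp Require Import zify.
Set Implicit Arguments. Unset Strict Implicit. Unset Printing Implicit Defensive.
Import GRing.Theory.

Lemma F2xx (x : 'F_2) : (x + x = 0)%R.
Proof. by case: x => [[|[|]]] //= ?; apply/eqP. Qed.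

Section Proof.
Variable k : nat.
Hypothesis k2 : (2 <= k)%N.

Lemma d0P : (0 < 2 * k + 1)%N. Proof. by rewrite addn1. Qed.
Definition d0 : 'I_(2 * k + 1) := Ordinal d0P.
Definition nd (j : nat) : 'I_(2 * k + 1) := insubd d0 j.
Definition er (S : {set 'I_(2 * k + 1)}) (j : nat) : bool :=
  (j < 2 * k + 1)%N && (nd j \in S).
Definition colv (j : nat) : 'cV['F_2]_k := \col_(l < k) gc_entry k j l.

Lemma val_nd j : (j < 2 * k + 1)%N -> val (nd j) = j.
Proof. by move=> Hj; rewrite val_insubd Hj. Qed.

Lemma col_nd j : (j < 2 * k + 1)%N -> col (nd j) (Gc k) = colv j.
Proof. by move=> Hj; apply/matrixP => l m; rewrite !mxE val_nd. Qed.

Lemma nd_neq a b : (a < 2 * k + 1)%N -> (b < 2 * k + 1)%N -> a != b -> nd a != nd b.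
Proof. by move=> Ha Hb Hab; rewrite -(inj_eq val_inj) !val_nd. Qed.

Definition Goal_ (S : {set 'I_(2 * k + 1)}) :=
  exists2 y, y \in S & easy_repair (Gc k) (~: S) y.

Lemma R1 S x a : (x < 2 * k + 1)%N -> (a < 2 * k + 1)%N ->
  er S x -> ~~ er S a -> colv x = colv a -> Goal_ S.
Proof.
move=> Hx Ha /andP [_ Sx]; rewrite /er Ha /= => Sa E.
exists (nd x) => //; exists [set nd a]; split.
- by rewrite sub1set inE.
- by rewrite cards1.
- split; last by rewrite big_set1 !col_nd.
  rewrite in_set1; apply/eqP => E'; by move: Sa; rewrite -E' Sx.
Qed.

Lemma R2 S x a b : (x < 2 * k + 1)%N -> (a < 2 * k + 1)%N -> (b < 2 * k + 1)%N ->
  a != b -> er S x -> ~~ er S a -> ~~ er S b -> (colv x = colv a + colv b)%R -> Goal_ S.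
Proof.
move=> Hx Ha Hb Hab /andP [_ Sx]; rewrite /er Ha Hb /= => Sa Sb E.
have nab := nd_neq Ha Hb Hab.
exists (nd x) => //; exists [set nd a; nd b]; split.
- by rewrite subUset !sub1set !inE Sa Sb.
- by rewrite cards2 nab.
- split.
  + rewrite in_set2; apply/norP; split; apply/eqP => E'.
    * by move: Sa; rewrite -E' Sx.
    * by move: Sb; rewrite -E' Sx.
  + rewrite big_setU1 /=; last by rewrite in_set1.
    by rewrite big_set1 !col_nd.
Qed.

Lemma colv0 : colv 0 = colv 1.
Proof.
apply/matrixP => l z; rewrite !mxE /gc_entry /=.
have -> : (1 == 2 * k)%N = false by lia.
by [].
Qed.

Lemma colvk : colv (2 * k) = colv (2 * k - 1).
Proof.
apply/matrixP => l z; rewrite !mxE /gc_entry /=.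
have -> : (2 * k == 0)%N = false by lia.
have -> : (2 * k - 1 == 0)%N = false by lia.
have -> : (2 * k - 1 == 2 * k)%N = false by lia.
have -> : odd (2 * k - 1) by lia.
have -> : ((2 * k - 1)./2 = k.-1)%N by lia.
by rewrite eqxx.
Qed.

Section Tri.
Variable m : nat.
Hypothesis Hm : (m.+2 <= k)%N.

Lemma entries l :
  [/\ gc_entry k (2 * m + 1) l = e_at m l,
      gc_entry k (2 * m + 2) l = (e_at m l + e_at m.+1 l)%R &
      gc_entry k (2 * m + 3) l = e_at m.+1 l].
Proof.
rewrite /gc_entry.
have -> : (2 * m + 1 == 0)%N = false by lia.
have -> : (2 * m + 2 == 0)%N = false by lia.
have -> : (2 * m + 3 == 0)%N = false by lia.
have -> : (2 * m + 1 == 2 * k)%N = false by lia.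
have -> : (2 * m + 2 == 2 * k)%N = false by lia.
have -> : (2 * m + 3 == 2 * k)%N = false by lia.
have -> : odd (2 * m + 1) by lia.
have -> : odd (2 * m + 2) = false by lia.
have -> : odd (2 * m + 3) by lia.
have -> : ((2 * m + 1)./2 = m)%N by lia.
have -> : ((2 * m + 2)./2 = m.+1)%N by lia.
have -> : ((2 * m + 3)./2 = m.+1)%N by lia.
by [].
Qed.

Lemma tri1 : (colv (2 * m + 2) = colv (2 * m + 1) + colv (2 * m + 3))%R.
Proof. apply/matrixP => l z; rewrite !mxE; by case: (entries l) => -> -> ->. Qed.
Lemma tri2 : (colv (2 * m + 1) = colv (2 * m + 2) + colv (2 * m + 3))%R.
Proof.
apply/matrixP => l z; rewrite !mxE; case: (entries l) => -> -> ->.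
by rewrite -addrA F2xx addr0.
Qed.
Lemma tri3 : (colv (2 * m + 3) = colv (2 * m + 1) + colv (2 * m + 2))%R.
Proof.
apply/matrixP => l z; rewrite !mxE; case: (entries l) => -> -> ->.
by rewrite addrA F2xx add0r.
Qed.
End Tri.

Definition c S j :=
  if j == 0%N then er S 0 != er S 1
  else if j == k then er S (2 * k) != er S (2 * k - 1)
  else if er S (2 * j) then ~~ er S (2 * j - 1) && ~~ er S (2 * j + 1)
  else er S (2 * j - 1) != er S (2 * j + 1).

Lemma cG S j : (j <= k)%N -> c S j -> Goal_ S.
Proof.
rewrite /c => Hj.
case: ifP => [/eqP _ | j0].
  case E0: (er S 0); case E1: (er S 1) => //= _.
  - by apply: (@R1 S 0 1); rewrite ?E0 ?E1 //; first [lia | exact: colv0].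
  - by apply: (@R1 S 1 0); rewrite ?E0 ?E1 //; first [lia | by rewrite colv0].
case: ifP => [/eqP _ | jk].
  case E0: (er S (2 * k)); case E1: (er S (2 * k - 1)) => //= _.
  - by apply: (@R1 S (2 * k) (2 * k - 1)); rewrite ?E0 ?E1 //; first [lia | exact: colvk].
  - by apply: (@R1 S (2 * k - 1) (2 * k)); rewrite ?E0 ?E1 //; first [lia | by rewrite colvk].
destruct j as [|m]; first by [].
have Hm : (m.+2 <= k)%N by move/eqP: jk; move/eqP: j0; lia.
have -> : (2 * m.+1 = 2 * m + 2)%N by lia.
have -> : (2 * m + 2 - 1 = 2 * m + 1)%N by lia.
have -> : (2 * m + 2 + 1 = 2 * m + 3)%N by lia.
case E0: (er S (2 * m + 2)); case E1: (er S (2 * m + 1));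
  case E3: (er S (2 * m + 3)) => //= _.
- by apply: (@R2 S (2 * m + 2) (2 * m + 1) (2 * m + 3));
    rewrite ?E0 ?E1 ?E3 //; first [lia | (apply/eqP; lia) | exact: tri1].
- by apply: (@R2 S (2 * m + 1) (2 * m + 2) (2 * m + 3));
    rewrite ?E0 ?E1 ?E3 //; first [lia | (apply/eqP; lia) | exact: tri2].
- by apply: (@R2 S (2 * m + 3) (2 * m + 1) (2 * m + 2));
    rewrite ?E0 ?E1 ?E3 //; first [lia | (apply/eqP; lia) | exact: tri3].
Qed.

Lemma sumE (w : nat -> 'F_2) (Hw : forall m, (k <= m)%N -> w m = 0%R) m :
  (\sum_(l < k) w l * e_at m l = w m)%R.
Proof.
case: (ltnP m k) => Hm.
  rewrite (bigD1 (Ordinal Hm)) //= /e_at eqxx mulr1 big1 ?addr0 // => i Hi.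
  have -> : (nat_of_ord i == m) = false by apply/negbTE; exact Hi.
  by rewrite mulr0.
rewrite Hw // big1 // => i _; rewrite /e_at.
have -> : (nat_of_ord i == m) = false by apply/eqP => E; move: (ltn_ord i); lia.
by rewrite mulr0.
Qed.

Definition cval (w : nat -> 'F_2) (j : nat) : 'F_2 :=
  if j == 0%N then w 0%N else if j == (2 * k)%N then w k.-1
  else if odd j then w j./2 else (w (j./2).-1 + w j./2)%R.

Lemma cvalE (w : nat -> 'F_2) (Hw : forall m, (k <= m)%N -> w m = 0%R) (j : 'I_(2 * k + 1)) :
  codeword (Gc k) (\row_(l < k) w l) 0%R j = cval w j.
Proof.
rewrite /codeword mxE.
under eq_bigr => i _ do rewrite !mxE.
rewrite /gc_entry /cval.
case: ifP => _; first exact: sumE.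
case: ifP => _; first exact: sumE.
case: ifP => _; first exact: sumE.
under eq_bigr => i _ do rewrite mulrDr.
by rewrite big_split /= !sumE.
Qed.

Lemma step S : correctable (Gc k) S -> S != set0 -> Goal_ S.
Proof.
move=> Hc Hn.
case: (boolP [exists j : 'I_k.+1, c S j]) => [/existsP [j Hj] | Hno].
  by apply: (@cG S j) => //; rewrite -ltnS.
have Hnc : forall j, (j <= k)%N -> c S j = false.
  move=> j Hj; apply/negbTE; move: Hno; rewrite negb_exists => /forallP.
  have Hj' : (j < k.+1)%N by rewrite ltnS.
  by move/(_ (Ordinal Hj')).
pose w (m : nat) : 'F_2 := if er S (2 * m + 1) then 1%R else 0%R.
have Hw : forall m, (k <= m)%N -> w m = 0%R.
  move=> m Hm; rewrite /w /er.
  by have -> : (2 * m + 1 < 2 * k + 1)%N = false by lia.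
have ejP : forall j : 'I_(2 * k + 1), er S j = (j \in S).
  by move=> j; rewrite /er ltn_ord /nd valKd.
have Hz : forall j : 'I_(2 * k + 1), j \notin S ->
    codeword (Gc k) (\row_(l < k) w l) 0%R j = codeword (Gc k) 0%R 0%R j.
  move=> j Hj; rewrite cvalE // /codeword mul0mx mxE.
  have ej : er S j = false by rewrite ejP; apply/negbTE.
  have jlt := ltn_ord j.
  move: ej; rewrite /cval; set jv := nat_of_ord j.
  case: ifP => [/eqP -> | j0] ej.
    have := Hnc 0%N isT; rewrite /c eqxx ej /w.
    have -> : (2 * 0 + 1 = 1)%N by [].
    by case: (er S 1).
  case: ifP => [/eqP E | jk].
    have := Hnc k (leqnn k); rewrite /c.
    have -> : (k == 0%N) = false by lia.
    rewrite eqxx; rewrite E in ej; rewrite ej /w.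
    have -> : (2 * k.-1 + 1 = 2 * k - 1)%N by lia.
    by case: (er S (2 * k - 1)).
  case: ifP => [Ho | Ho].
    rewrite /w; have -> : (2 * jv./2 + 1 = jv)%N by lia.
    by rewrite ej.
  have Hi : (jv./2 <= k)%N by lia.
  have := Hnc _ Hi; rewrite /c.
  have -> : (jv./2 == 0%N) = false by move/negbT: j0; move/negbT: Ho; lia.
  have -> : (jv./2 == k) = false by move/negbT: jk; move/negbT: Ho; lia.
  have ej2 : er S (2 * jv./2) = false.
    by have -> : (2 * jv./2 = jv)%N by move/negbT: Ho; lia.
  rewrite ej2 /w.
  have -> : (2 * (jv./2).-1 + 1 = 2 * jv./2 - 1)%N by move/negbT: j0; move/negbT: Ho; lia.
  by case: (er S (2 * jv./2 - 1)); case: (er S (2 * jv./2 + 1)) => //= _; rewrite ?F2xx ?addr0.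
have H0 := Hc _ _ Hz.
have Hodd : forall i, (i < k)%N -> er S (2 * i + 1) = false.
  move=> i Hi; apply/negbTE/negP => Hei.
  have Hlt : (2 * i + 1 < 2 * k + 1)%N by lia.
  have := congr1 (fun M : 'M['F_2]_(1, 2 * k + 1) => M 0%R (nd (2 * i + 1))) H0.
  rewrite /= cvalE // /codeword mul0mx [in RHS]mxE val_nd // /cval.
  have -> : (2 * i + 1 == 0)%N = false by lia.
  have -> : (2 * i + 1 == 2 * k)%N = false by lia.
  have -> : odd (2 * i + 1) by lia.
  have -> : ((2 * i + 1)./2 = i)%N by lia.
  by rewrite /w Hei => /eqP.
case/set0Pn: Hn => x Hx.
have ex : er S x by rewrite ejP.
have xlt := ltn_ord x.
move: ex; set jv := nat_of_ord x => ex.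
case: (boolP (odd jv)) => Ho.
  have Hi : (jv./2 < k)%N by lia.
  have := Hodd _ Hi.
  have -> : (2 * jv./2 + 1 = jv)%N by lia.
  by rewrite ex.
have Hi : (jv./2 <= k)%N by lia.
have := Hnc _ Hi; rewrite /c.
have E2 : (2 * jv./2 = jv)%N by lia.
case: ifP => [/eqP E0 | j0].
  have Hj0 : jv = 0%N by lia.
  rewrite Hj0 in ex.
  have := Hodd 0%N (ltnW k2); rewrite muln0 add0n => ->.
  by rewrite ex.
case: ifP => [/eqP Ek | jk].
  have := Hodd k.-1 (ltac:(lia)).
  have -> : (2 * k.-1 + 1 = 2 * k - 1)%N by lia.
  move=> ->.
  have Hjk : jv = (2 * k)%N by lia.
  by rewrite Hjk in ex; rewrite ex.
have e2 : er S (2 * jv./2) by rewrite E2.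
rewrite e2.
have := Hodd (jv./2).-1 (ltac:(move/negbT: jk; lia)).
have -> : (2 * (jv./2).-1 + 1 = 2 * jv./2 - 1)%N by move/negbT: j0; lia.
move=> ->.
have := Hodd jv./2 (ltac:(move/negbT: jk; lia)).
by move=> ->.
Qed.

Lemma er_mono (L L' : {set 'I_(2 * k + 1)}) x :
  L \subset L' -> easy_repair (Gc k) L x -> easy_repair (Gc k) L' x.
Proof.
move=> sLL' [T [sT cT rT]]; exists T; split => //.
exact: subset_trans sLL'.
Qed.

Lemma main N : forall S : {set 'I_(2 * k + 1)}, #|S| = N ->
  correctable (Gc k) S -> allows_easy_repair (Gc k) S.
Proof.
elim: N => [|N IH] S HN Hc.
  have -> : S = set0 by apply/eqP; rewrite -cards_eq0 HN.
  exists [::]; split; first by rewrite enum_set0.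
  by move=> [|??] ??.
have Sn : S != set0 by rewrite -card_gt0 HN.
have [x Sx Ex] := step Hc Sn.
have HN' : #|S :\ x| = N by rewrite (cardsD1 x S) Sx in HN; case: HN.
have Hc' : correctable (Gc k) (S :\ x).
  move=> u v H; apply: Hc => j Hj; apply: H.
  by rewrite !inE negb_and Hj orbT.
have [s' [Hp Hs']] := IH _ HN' Hc'.
exists (x :: s'); split.
  have P1 : perm_eq (x :: s') (x :: enum (S :\ x)) by rewrite perm_cons.
  apply: perm_trans P1 _.
  apply: uniq_perm.
  - by rewrite /= enum_uniq mem_enum !inE eqxx.
  - exact: enum_uniq.
  - move=> y; rewrite inE !mem_enum !inE.
    by case: (eqVneq y x) => [->|]; rewrite ?Sx.
move=> [|z s1] s2 y /= [].
  move=> <- _; apply: er_mono Ex.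
  by apply/subsetP => z; rewrite !inE => ->.
move=> <- Es'.
apply: er_mono (Hs' _ _ _ Es').
apply/subsetP => t; rewrite !inE.
case: (eqVneq t x) => [->|] /=; first by rewrite !orbT.
by [].
Qed.

End Proof.

Theorem theorem4p5 (k : nat) : (2 <= k)%N -> easy_repair_property (Gc k).
Proof. move=> k2 S Hc; exact: (@main k k2 #|S| S). Qed.
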